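(* Let $\mathit{VI}$ be a finite set of variables with $\#\mathit{VI}=n$ and let $1\le k\le n$. Then for every $sh\in\mathit{SH}$, $\rho_{\mathit{TSD}_k}(sh^k)=sh^\star$.
   Context: $\mathit{SG}=\wp(\mathit{VI})\setminus\{\emptyset\}$ and $\mathit{SH}=\wp(\mathit{SG})$. For $sh\in\mathit{SH}$: the star-union is $sh^\star=\{S\in\mathit{SG}\mid \exists sh'\subseteq sh: S=\bigcup sh'\}$; for $j\ge1$ the $j$-self-union is $sh^j=\{S\in\mathit{SG}\mid \exists sh'\subseteq sh: \#sh'\le j,\ S=\bigcup sh'\}$. Also $\rho_{\mathit{TSD}_k}(sh)=\{\,S\in\mathit{SG}\mid \forall T\subseteq S:\ \#T<k\implies S=\bigcup\{U\in sh\mid T\subseteq U\subseteq S\}\,\}$. *)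

(* Defs.v *)
From mathcomp Require Import all_boot.
Set Implicit Arguments. Unset Strict Implicit. Unset Printing Implicit Defensive.

Definition SG (VI : finType) : {set {set VI}} := [set S : {set VI} | S != set0].

Definition star_union (VI : finType) (sh : {set {set VI}}) : {set {set VI}} :=
  [set S : {set VI} | (S \in SG VI) &&
     [exists sh' : {set {set VI}}, (sh' \subset sh) && (S == \bigcup_(U in sh') U)]].

Definition self_union (VI : finType) (j : nat) (sh : {set {set VI}}) : {set {set VI}} :=
  [set S : {set VI} | (S \in SG VI) &&
     [exists sh' : {set {set VI}},
        [&& sh' \subset sh, #|sh'| <= j & S == \bigcup_(U in sh') U]]].

Definition rho_TSD (VI : finType) (k : nat) (sh : {set {set VI}}) : {set {set VI}} :=
  [set S : {set VI} | (S \in SG VI) &&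
     [forall T : {set VI}, (T \subset S) ==> (#|T| < k) ==>
        (S == \bigcup_(U in sh | (T \subset U) && (U \subset S)) U)]].

(* Main.v *)
Require Import Defs.
From mathcomp Require Import all_boot.

Lemma pick_in (VI : finType) (sh' : {set {set VI}}) (t : VI) :
  t \in \bigcup_(V in sh') V ->
  let V := odflt set0 [pick V in sh' | t \in V] in (V \in sh') && (t \in V).
Proof.
move=> /bigcupP [W WI tW] /=.
case: pickP => [V /andP [] -> -> //|/(_ W)]; by rewrite WI tW.
Qed.

Theorem proposition3p13 (VI : finType) (n k : nat) (sh : {set {set VI}}) :
  #|VI| = n -> 1 <= k <= n -> sh \subset SG VI ->
  rho_TSD k (self_union k sh) = star_union sh.
Proof.
move=> _ /andP [k1 _] _.
apply/setP => S; rewrite !inE; apply/andP/andP => -[SG0 H]; split => //.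
- move/forallP: H => /(_ set0); rewrite sub0set cards0 k1 /= => /eqP HS.
  apply/existsP; exists [set V in sh | V \subset S].
  rewrite eqEsubset; apply/andP; split.
    by apply/subsetP => V; rewrite inE => /andP [].
  apply/andP; split.
    apply/subsetP => x; rewrite {1}HS => /bigcupP [U /andP [UI /andP [_ US]] xU].
    move: UI; rewrite inE => /andP [_ /existsP [sh0 /and3P [s0 _ /eqP E]]].
    move: xU; rewrite E => /bigcupP [V V0 xV].
    apply/bigcupP; exists V => //; rewrite inE (subsetP s0 _ V0) /=.
    by apply: subset_trans (US); rewrite E (bigcup_sup V V0).
  by apply/bigcupsP => V; rewrite inE => /andP [].
- move/existsP: H => [sh' /andP [ss /eqP ES]].
  apply/forallP => T; apply/implyP => TS; apply/implyP => Tk.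
  rewrite eqEsubset; apply/andP; split; last first.
    by apply/bigcupsP => U /andP [_ /andP [_ ]].
  apply/subsetP => x xS.
  pose f t := odflt set0 [pick V in sh' | t \in V].
  have fP t : t \in S -> (f t \in sh') && (t \in f t).
    by rewrite ES => /pick_in.
  have fS t : f t \subset S.
    rewrite /f; case: pickP => [V /andP [V1 _]|_] /=; last exact: sub0set.
    by rewrite ES (bigcup_sup V V1).
  pose X := x |: T.
  have XS : X \subset S by rewrite subUset sub1set xS TS.
  pose F := [set f t | t in X].
  have FS : F \subset sh'.
    by apply/subsetP => V /imsetP [t tX ->]; case/andP: (fP t (subsetP XS t tX)).
  have inU t : t \in X -> t \in \bigcup_(V in F) V.
    move=> tX; apply/bigcupP; exists (f t); first by apply: imset_f.
    by case/andP: (fP t (subsetP XS t tX)).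
  apply/bigcupP; exists (\bigcup_(V in F) V); last by apply: inU; rewrite setU11.
  apply/andP; split.
    rewrite !inE; apply/andP; split.
      by apply/set0Pn; exists x; apply: inU; rewrite setU11.
    apply/existsP; exists F; rewrite (subset_trans FS ss) eqxx andbT /=.
    apply: leq_trans (leq_imset_card _ _) _.
    by rewrite cardsU1; apply: leq_trans (leq_add (leq_b1 _) (leqnn _)) _.
  apply/andP; split.
    by apply/subsetP => t tT; apply: inU; rewrite setU1r.
  by apply/bigcupsP => V /imsetP [t _ ->].
Qed.
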